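(* Let $\mathcal{A}$ be a finite-dimensional $C^*$-algebra with a faithful trace $\tau$, and let $\{a_j\}_{j=1}^m$ be an orthonormal basis of $\mathcal{A}$ with respect to $\tau$. Then \[ \sum_{j=1}^m Ja_jJ\otimes a_j\geq 0 \] in $\mathcal{A}'\otimes\mathcal{A}$.
   Context: $L^2(\mathcal{A},\tau)$ is the GNS Hilbert space of $\tau$ with cyclic vacuum vector $\Omega$ and inner product $\langle a\Omega,b\Omega\rangle=\tau(b^*a)$; $\mathcal{A}$ acts on it by left multiplication, and $\mathcal{A}'$ is the commutant. $J$ is the modular conjugation, the antiunitary $J(a\Omega)=a^*\Omega$, so that $J\mathcal{A}J=\mathcal{A}'$. Orthonormality is with respect to $\langle a,b\rangle=\tau(b^*a)$. *)

(* Defs.v *)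
From HB Require Import structures.
From mathcomp Require Import all_boot all_order all_algebra.
Set Implicit Arguments. Unset Strict Implicit. Unset Printing Implicit Defensive.
Import Order.TTheory GRing.Theory Num.Theory.
Local Open Scope ring_scope.

Section Defs.
Variables (C : numClosedFieldType) (n : nat).
Local Notation M := 'M[C]_n.

Definition adj (x : M) : M := map_mx (fun z => z^*) x^T.

(** A : a *-subalgebra of M_n(C), i.e. (concretely) a finite-dimensional
    C*-algebra. *)
Definition star_subalgebra (A : {pred M}) : Prop :=
  [/\ (0 : M) \in A,
      forall (c : C) x y, x \in A -> y \in A -> c *: x + y \in A,
      forall x y, x \in A -> y \in A -> x *m y \in A &
      forall x, x \in A -> adj x \in A].

Definition faithful_trace (A : {pred M}) (tau : M -> C) : Prop :=
  [/\ forall (c : C) x y, x \in A -> y \in A -> tau (c *: x + y) = c * tau x + tau y,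
      forall x y, x \in A -> y \in A -> tau (x *m y) = tau (y *m x),
      forall x, x \in A -> 0 <= tau (adj x *m x) &
      forall x, x \in A -> tau (adj x *m x) = 0 -> x = 0].

(** GNS inner product on L^2(A,tau) = A : <x, y> = tau (y^* x). *)
Definition ip (tau : M -> C) (x y : M) : C := tau (adj y *m x).

Definition orthonormal_basis (A : {pred M}) (tau : M -> C) (m : nat)
    (a : 'I_m -> M) : Prop :=
  [/\ forall j, a j \in A,
      forall j k, ip tau (a j) (a k) = (j == k)%:R &
      forall x, x \in A -> exists c : 'I_m -> C, x = \sum_(j < m) c j *: a j].

Definition Lmul (a : M) : M -> M := fun b => a *m b.
Definition Jmod (b : M) : M := adj b.
Definition JaJ (a : M) : M -> M := fun b => Jmod (Lmul a (Jmod b)).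

(** The operator \sum_j S_j (x) T_j on L^2(A,tau) (x) L^2(A,tau) is positive:
    <X xi, xi> >= 0 for every xi = \sum_k x_k (x) y_k with x_k, y_k in A
    (such vectors exhaust the Hilbert tensor product), where the inner product
    on the tensor product is <x (x) y, x' (x) y'> = <x,x'><y,y'>. *)
Definition tensor_op_pos (A : {pred M}) (tau : M -> C) (m : nat)
    (S T : 'I_m -> M -> M) : Prop :=
  forall (N : nat) (x y : 'I_N -> M),
    (forall k, x k \in A) -> (forall k, y k \in A) ->
    0 <= \sum_(k < N) \sum_(l < N) \sum_(j < m)
           ip tau (S j (x k)) (x l) * ip tau (T j (y k)) (y l).

End Defs.

(* Main.v *)
Require Import Defs.
From HB Require Import structures.
From mathcomp Require Import all_boot all_order all_algebra.
Import Order.TTheory GRing.Theory Num.Theory.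
Local Open Scope ring_scope.
Set Implicit Arguments.

Section Helpers.
Variables (C : numClosedFieldType) (n : nat).
Local Notation M := 'M[C]_n.

Lemma adjM (x y : M) : adj (x *m y) = adj y *m adj x.
Proof.
apply/matrixP=> i j; rewrite /adj !mxE rmorph_sum; apply: eq_bigr => k _.
by rewrite !mxE rmorphM mulrC.
Qed.

Lemma adjK (x : M) : adj (adj x) = x.
Proof. by apply/matrixP=> i j; rewrite /adj !mxE conjCK. Qed.

Lemma adj_sum (I : Type) (r : seq I) (F : I -> M) :
  adj (\sum_(i <- r) F i) = \sum_(i <- r) adj (F i).
Proof.
apply/matrixP=> i j; rewrite /adj !mxE !summxE rmorph_sum.
by apply: eq_bigr => k _; rewrite !mxE.
Qed.

Variables (A : {pred M}) (tau : M -> C).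
Hypothesis (HA : star_subalgebra A) (Ht : faithful_trace A tau).

Lemma A0 : (0 : M) \in A. Proof. by case: HA. Qed.
Lemma AD c x y : x \in A -> y \in A -> c *: x + y \in A.
Proof. by case: HA => _ H _ _; apply: H. Qed.
Lemma AM x y : x \in A -> y \in A -> x *m y \in A.
Proof. by case: HA => _ _ H _; apply: H. Qed.
Lemma Aadj x : x \in A -> adj x \in A.
Proof. by case: HA => _ _ _ H; apply: H. Qed.

Lemma tau0 : tau 0 = 0.
Proof.
case: Ht => H _ _ _.
have := H 1 0 0 A0 A0; rewrite scale1r addr0 mul1r => /esym /eqP.
by rewrite -subr_eq0 addrK => /eqP.
Qed.

Lemma tau_sum (I : Type) (r : seq I) (c : I -> C) (F : I -> M) :
  (forall i, F i \in A) ->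
  (\sum_(i <- r) c i *: F i \in A) /\
  tau (\sum_(i <- r) c i *: F i) = \sum_(i <- r) c i * tau (F i).
Proof.
move=> HF; elim: r => [|i r [IH1 IH2]]; first by rewrite !big_nil A0 tau0.
rewrite !big_cons; split; first exact: AD.
by case: Ht => H _ _ _; rewrite H // IH2.
Qed.

Lemma tau_sum1 (I : Type) (r : seq I) (F : I -> M) :
  (forall i, F i \in A) ->
  (\sum_(i <- r) F i \in A) /\
  tau (\sum_(i <- r) F i) = \sum_(i <- r) tau (F i).
Proof.
move=> HF; have [H1 H2] := tau_sum r (fun=> 1) F HF.
under eq_bigr do rewrite -[F _]scale1r.
split=> //; rewrite H2; by under eq_bigr do rewrite mul1r.
Qed.

Lemma tauC x y : x \in A -> y \in A -> tau (x *m y) = tau (y *m x).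
Proof. by case: Ht => _ H _ _; apply: H. Qed.

Lemma expand m (a : 'I_m -> M) : orthonormal_basis A tau a ->
  forall b, b \in A -> b = \sum_(j < m) ip tau b (a j) *: a j.
Proof.
case=> Ha Ho Hs b Hb; have [c ->] := Hs b Hb.
apply: eq_bigr => k _; congr (_ *: _).
rewrite /ip mulmx_sumr.
under eq_bigr do rewrite -scalemxAr.
have [_ ->] := tau_sum (index_enum 'I_m) c (fun j => adj (a k) *m a j)
  (fun j => AM (Aadj (Ha k)) (Ha j)).
rewrite (bigD1 k) //= big1 ?addr0.
  by have := Ho k k; rewrite /ip => ->; rewrite eqxx mulr1.
by move=> j /negPf Hj; have := Ho j k; rewrite /ip => ->; rewrite Hj mulr0.
Qed.

End Helpers.

Theorem mainTheorem12 (C : numClosedFieldType) (n : nat) (A : {pred 'M[C]_n})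
    (tau : 'M[C]_n -> C) (m : nat) (a : 'I_m -> 'M[C]_n) :
  star_subalgebra A -> faithful_trace A tau -> orthonormal_basis A tau a ->
  tensor_op_pos A tau (fun j => JaJ (a j)) (fun j => Lmul (a j)).
Proof.
move=> HA Ht Hb N x y Hx Hy.
have Ha : forall j, a j \in A by case: Hb.
set w := fun k => x k *m y k.
have Hw : forall k, w k \in A by move=> k; exact: AM.
have step : forall k l,
  \sum_(j < m) ip tau (JaJ (a j) (x k)) (x l) * ip tau (Lmul (a j) (y k)) (y l)
  = tau (adj (w l) *m w k).
  move=> k l.
  set b := adj (x l) *m x k.
  set c := y k *m adj (y l).
  have Hbb : b \in A by apply: (AM HA) => //; apply: (Aadj HA).
  have Hc : c \in A by apply: (AM HA) => //; apply: (Aadj HA).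
  have E1 : forall j, ip tau (JaJ (a j) (x k)) (x l) = ip tau b (a j).
    move=> j; rewrite /ip /JaJ /Jmod /Lmul adjM adjK mulmxA.
    by rewrite (tauC Ht) ?Hbb ?(Aadj HA).
  have E2 : forall j, ip tau (Lmul (a j) (y k)) (y l) = tau (a j *m c).
    move=> j; rewrite /ip /Lmul (tauC Ht); last by apply: (AM HA).
      by rewrite /c !mulmxA.
    exact: (Aadj HA).
  under eq_bigr do rewrite E1 E2.
  have [_ <-] := tau_sum HA Ht (index_enum 'I_m) (fun j => ip tau b (a j))
     (fun j => a j *m c) (fun j => AM HA _ _ (Ha j) Hc).
  under eq_bigr do rewrite scalemxAl.
  rewrite -mulmx_suml -(expand HA Ht Hb _ Hbb).
  rewrite /b /c /w adjM !mulmxA (tauC Ht); first by rewrite !mulmxA.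
    by apply: (AM HA) => //; apply: (AM HA) => //; apply: (AM HA) => //; apply: (Aadj HA).
  exact: (Aadj HA).
under eq_bigr do under eq_bigr do rewrite step.
have E : forall k, \sum_(l < N) tau (adj (w l) *m w k)
     = tau (\sum_(l < N) adj (w l) *m w k).
  move=> k; have [_ ->] := tau_sum1 HA Ht (index_enum 'I_N) (fun l => adj (w l) *m w k)
     (fun l => AM HA _ _ (Aadj HA _ (Hw l)) (Hw k)) => //.
under eq_bigr do rewrite E.
have Hin : forall k, \sum_(l < N) adj (w l) *m w k \in A.
  move=> k; by have [-> _] := tau_sum1 HA Ht (index_enum 'I_N) (fun l => adj (w l) *m w k)
     (fun l => AM HA _ _ (Aadj HA _ (Hw l)) (Hw k)).
have [_ <-] := tau_sum1 HA Ht (index_enum 'I_N) _ Hin.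
idtac.
have -> : \sum_(k < N) \sum_(l < N) adj (w l) *m w k
        = adj (\sum_(l < N) w l) *m \sum_(k < N) w k.
  rewrite adj_sum mulmx_suml exchange_big /=.
  by apply: eq_bigr => k _; rewrite mulmx_sumr.
have [HZ _] := tau_sum1 HA Ht (index_enum 'I_N) w Hw.
case: Ht => _ _ H _; exact: (H _ HZ).
Qed.
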